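(* Let $B_0$ be a finite Blaschke product, $\gamma\in\mathbb D$, and $m$ a positive integer. Then there exist $\zeta^*\in\mathbb D$ and a holomorphic map $f:\mathbb D\to\mathbb D$ such that $f=B_0\tilde g$ with $\tilde g$ holomorphic on $\mathbb D$, and $f(\zeta^*+h)=\gamma+O(h^m)$ as $h\to0$.
   Context: $\mathbb D$ is the open unit disc in $\mathbb C$. *)

(* Defs.v *)
From Stdlib Require Import Reals List.
From Coquelicot Require Import Coquelicot.
Open Scope R_scope.

Definition in_disc (z : C) : Prop := Cmod z < 1.

Definition holomorphic_on_disc (f : C -> C) : Prop :=
  forall z : C, in_disc z -> @ex_derive C_AbsRing C_NormedModule f z.

Definition blaschke_prod (a : list C) (z : C) : C :=
  fold_right (fun ak acc => Cmult (Cdiv (Cminus z ak) (Cminus 1 (Cmult (Cconj ak) z))) acc)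
             (RtoC 1) a.

(* B is a finite Blaschke product on D:  B(z) = c * prod_k (z-a_k)/(1-conj(a_k) z)
   with |c| = 1 and all a_k in D (zeros repeated according to multiplicity). *)
Definition finite_blaschke (B : C -> C) : Prop :=
  exists (c : C) (a : list C),
    Cmod c = 1 /\ List.Forall in_disc a /\
    forall z : C, in_disc z -> B z = Cmult c (blaschke_prod a z).

(* Main.v *)
Require Import Defs.
From Stdlib Require Import Reals List.
From Coquelicot Require Import Coquelicot.
Open Scope R_scope.
From Stdlib Require Import Lra Psatz.


Lemma Cmod_rev (x y : C) : Cmod x - Cmod y <= Cmod (Cminus x y).
Proof.
  assert (H := Cmod_triangle (Cminus x y) y).
  replace (Cplus (Cminus x y) y) with x in H by ring. lra.
Qed.

Lemma id1 (z a : C) : Cmod (Cminus 1 (Cmult (Cconj a) z)) ^ 2 - Cmod (Cminus z a) ^ 2 = (1 - Cmod a ^2) * (1 - Cmod z ^2).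
Proof. destruct z as [z1 z2], a as [a1 a2]. rewrite !Cmod2_alt. simpl. ring. Qed.

Lemma id2 (u v g : C) : Cmod (Cplus u (Cmult (Cconj g) v)) ^ 2 - Cmod (Cplus v (Cmult g u)) ^ 2
  = (Cmod u ^ 2 - Cmod v ^ 2) * (1 - Cmod g ^ 2).
Proof. destruct u as [z1 z2], v as [a1 a2], g as [g1 g2]. rewrite !Cmod2_alt. simpl. ring. Qed.

Lemma sq_le (a b : R) : 0 <= a -> 0 <= b -> a ^ 2 <= b ^ 2 -> a <= b.
Proof. intros. nra. Qed.
Lemma sq_lt (a b : R) : 0 <= a -> 0 <= b -> a ^ 2 < b ^ 2 -> a < b.
Proof. intros. nra. Qed.

Lemma den_nz (x z : C) : Cmod x < 1 -> Cmod z <= 1 -> Cminus 1 (Cmult (Cconj x) z) <> RtoC 0.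
Proof.
  intros Hx Hz E.
  assert (H : Cmult (Cconj x) z = RtoC 1). { rewrite <- (Cplus_0_r (Cmult (Cconj x) z)). rewrite <- E. ring. }
  assert (H2 := f_equal Cmod H). rewrite Cmod_mult, Cmod_conj, Cmod_1 in H2.
  assert (0 <= Cmod z) by apply Cmod_ge_0. assert (0 <= Cmod x) by apply Cmod_ge_0. nra.
Qed.

Lemma den_ge (x z : C) : Cmod z <= 1 -> 1 - Cmod x <= Cmod (Cminus 1 (Cmult (Cconj x) z)).
Proof.
  intros Hz. assert (H := Cmod_rev (RtoC 1) (Cmult (Cconj x) z)).
  rewrite Cmod_1, Cmod_mult, Cmod_conj in H.
  assert (0 <= Cmod z) by apply Cmod_ge_0. assert (0 <= Cmod x) by apply Cmod_ge_0. nra.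
Qed.

Definition phi (x z : C) : C := Cdiv (Cminus z x) (Cminus 1 (Cmult (Cconj x) z)).

Lemma num_le (x z : C) : Cmod x < 1 -> Cmod z <= 1 -> Cmod (Cminus z x) <= Cmod (Cminus 1 (Cmult (Cconj x) z)).
Proof.
  intros Hx Hz. apply sq_le; try apply Cmod_ge_0.
  assert (H := id1 z x). assert (0 <= Cmod z) by apply Cmod_ge_0. assert (0 <= Cmod x) by apply Cmod_ge_0.
  assert (0 <= (1 - Cmod x ^ 2) * (1 - Cmod z ^ 2)). { apply Rmult_le_pos; nra. } lra.
Qed.

Lemma num_lt (x z : C) : Cmod x < 1 -> Cmod z < 1 -> Cmod (Cminus z x) < Cmod (Cminus 1 (Cmult (Cconj x) z)).
Proof.
  intros Hx Hz. apply sq_lt; try apply Cmod_ge_0.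
  assert (H := id1 z x). assert (0 <= Cmod z) by apply Cmod_ge_0. assert (0 <= Cmod x) by apply Cmod_ge_0.
  assert (0 < (1 - Cmod x ^ 2) * (1 - Cmod z ^ 2)). { apply Rmult_lt_0_compat; nra. } lra.
Qed.

Lemma phi_le1 (x z : C) : Cmod x < 1 -> Cmod z <= 1 -> Cmod (phi x z) <= 1.
Proof.
  intros Hx Hz. unfold phi. assert (Hn := den_nz x z Hx Hz). rewrite Cmod_div; auto.
  assert (0 < Cmod (Cminus 1 (Cmult (Cconj x) z))) by (apply Cmod_gt_0; auto).
  apply Rle_div_l; auto. rewrite Rmult_1_l. apply num_le; auto.
Qed.

Lemma phi_lt1 (x z : C) : Cmod x < 1 -> Cmod z < 1 -> Cmod (phi x z) < 1.
Proof.
  intros Hx Hz. unfold phi. assert (Hn := den_nz x z Hx (Rlt_le _ _ Hz)). rewrite Cmod_div; auto.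
  assert (0 < Cmod (Cminus 1 (Cmult (Cconj x) z))) by (apply Cmod_gt_0; auto).
  apply Rlt_div_l; auto. rewrite Rmult_1_l. apply num_lt; auto.
Qed.

Lemma bp_cons x a z : blaschke_prod (x :: a) z = Cmult (phi x z) (blaschke_prod a z).
Proof. reflexivity. Qed.

Lemma bp_le1 a z : List.Forall in_disc a -> Cmod z <= 1 -> Cmod (blaschke_prod a z) <= 1.
Proof.
  intros Ha Hz. induction Ha as [|x a Hx Ha IH].
  - unfold blaschke_prod. simpl. rewrite Cmod_1. lra.
  - rewrite bp_cons, Cmod_mult. assert (H := phi_le1 x z Hx Hz).
    assert (0 <= Cmod (phi x z)) by apply Cmod_ge_0. assert (0 <= Cmod (blaschke_prod a z)) by apply Cmod_ge_0. nra.
Qed.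

Lemma bp_lt1 x a z : List.Forall in_disc (x :: a) -> Cmod z < 1 -> Cmod (blaschke_prod (x :: a) z) < 1.
Proof.
  intros Ha Hz. inversion Ha; subst. rewrite bp_cons, Cmod_mult.
  assert (H := phi_lt1 x z H1 Hz). assert (H' := bp_le1 a z H2 (Rlt_le _ _ Hz)).
  assert (0 <= Cmod (phi x z)) by apply Cmod_ge_0. assert (0 <= Cmod (blaschke_prod a z)) by apply Cmod_ge_0. nra.
Qed.

Definition Ssum (a : list C) : R := fold_right (fun x acc => 2 / (1 - Cmod x) ^ 2 + acc) 0 a.

Lemma Ssum_cons x a : Ssum (x :: a) = 2 / (1 - Cmod x) ^ 2 + Ssum a.
Proof. reflexivity. Qed.

Lemma Ssum_ge0 a : List.Forall in_disc a -> 0 <= Ssum a.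
Proof.
  intros Ha. induction Ha as [|x a Hx Ha IH]. unfold Ssum; simpl; lra. rewrite Ssum_cons.
  unfold in_disc in Hx. assert (0 <= Cmod x) by apply Cmod_ge_0.
  assert (0 < 2 / (1 - Cmod x) ^ 2). { apply Rdiv_lt_0_compat. lra. apply pow_lt. lra. } lra.
Qed.

Lemma phi_lower (x : C) (r : R) : Cmod x < 1 -> 0 <= r < 1 ->
  1 - (1 - r^2) * (2 / (1 - Cmod x) ^ 2) <= Cmod (phi x (RtoC r)) ^ 2.
Proof.
  intros Hx Hr. assert (Hz : Cmod (RtoC r) <= 1). { rewrite Cmod_R, Rabs_pos_eq; lra. }
  assert (Hn := den_nz x _ Hx Hz). unfold phi. rewrite Cmod_div; auto.
  assert (H := id1 (RtoC r) x). rewrite Cmod_R, Rabs_pos_eq in H by lra.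
  assert (Hg := den_ge x (RtoC r) Hz).
  set (D := Cmod (Cminus 1 (Cmult (Cconj x) (RtoC r)))) in *.
  set (N := Cmod (Cminus (RtoC r) x)) in *.
  assert (0 <= Cmod x) by apply Cmod_ge_0.
  assert (0 <= N) by apply Cmod_ge_0.
  set (s := Cmod x) in *. clearbody D N s.
  assert (0 < 1 - s) by lra.
  assert (HD : 0 < D) by nra.
  assert (HD2 : (1-s)^2 <= D^2) by nra.
  assert (E : (N / D) ^ 2 = 1 - (1 - s^2)*(1-r^2) / D^2) .
  { replace (1 - (1 - s^2)*(1-r^2) / D^2) with ((D^2 - (1-s^2)*(1-r^2))/D^2) by (field; lra).
    replace (D^2 - (1-s^2)*(1-r^2)) with (N^2) by lra. field; lra. }
  rewrite E.
  assert ((1 - s^2)*(1-r^2) / D^2 <= (1 - r^2) * (2 / (1 - s) ^ 2)); [|lra].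
  apply Rle_div_l. nra.
  assert (0 <= 1 - r^2) by nra.
  assert (Hq: (1 - r ^ 2) * (2 / (1 - s) ^ 2) * D ^ 2 >= (1 - r ^ 2) * 2) .
  { replace ((1 - r ^ 2) * (2 / (1 - s) ^ 2) * D ^ 2) with ((1 - r ^ 2) * 2 * (D^2 / (1-s)^2)) by (field; lra).
    assert (1 <= D^2 / (1-s)^2). { apply Rle_div_r. nra. lra. } nra. }
  nra.
Qed.

Lemma bp_lower a r : List.Forall in_disc a -> 0 <= r < 1 ->
  1 - (1 - r^2) * Ssum a <= Cmod (blaschke_prod a (RtoC r)) ^ 2.
Proof.
  intros Ha Hr. assert (Hz : Cmod (RtoC r) <= 1). { rewrite Cmod_R, Rabs_pos_eq; lra. }
  induction Ha as [|x a Hx Ha IH].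
  - unfold Ssum, blaschke_prod; simpl. rewrite Cmod_1. lra.
  - rewrite bp_cons, Ssum_cons, Cmod_mult, Rpow_mult_distr.
    assert (H1 := phi_lower x r Hx Hr).
    assert (H2 := phi_le1 x _ Hx Hz). assert (H3 := bp_le1 a _ Ha Hz).
    assert (H4 := Ssum_ge0 a Ha).
    assert (0 <= Cmod (phi x r)) by apply Cmod_ge_0.
    assert (0 <= Cmod (blaschke_prod a r)) by apply Cmod_ge_0.
    assert (0 <= 2 / (1 - Cmod x) ^ 2).
    { unfold in_disc in Hx. apply Rlt_le, Rdiv_lt_0_compat. lra. apply pow_lt. lra. }
    set (u := Cmod (phi x r) ^ 2) in *. set (v := Cmod (blaschke_prod a r) ^ 2) in *.
    assert (0 <= u <= 1). { unfold u. split. apply pow_le; auto. nra. }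
    assert (0 <= v <= 1). { unfold v. split. apply pow_le; auto. nra. }
    set (al := (1 - r ^ 2) * (2 / (1 - Cmod x) ^ 2)) in *.
    set (be := (1 - r ^ 2) * Ssum a) in *.
    assert (0 <= al) by (unfold al; apply Rmult_le_pos; nra).
    assert (0 <= be) by (unfold be; apply Rmult_le_pos; nra).
    replace (1 - (1 - r ^ 2) * (2 / (1 - Cmod x) ^ 2 + Ssum a)) with (1 - al - be) by (unfold al, be; ring).
    clearbody u v al be.
    destruct (Rle_dec al 1); nra.
Qed.

Lemma phi_lip x z1 z2 : Cmod x < 1 -> Cmod z1 <= 1 -> Cmod z2 <= 1 ->
  Cmod (Cminus (phi x z1) (phi x z2)) <= 2 / (1 - Cmod x) ^ 2 * Cmod (Cminus z1 z2).
Proof.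
  intros Hx H1 H2.
  assert (N1 := den_nz x z1 Hx H1). assert (N2 := den_nz x z2 Hx H2).
  assert (G1 := den_ge x z1 H1). assert (G2 := den_ge x z2 H2).
  unfold phi.
  replace (Cminus (Cdiv (Cminus z1 x) (Cminus 1 (Cmult (Cconj x) z1))) (Cdiv (Cminus z2 x) (Cminus 1 (Cmult (Cconj x) z2))))
    with (Cdiv (Cmult (Cminus z1 z2) (Cminus 1 (Cmult x (Cconj x)))) (Cmult (Cminus 1 (Cmult (Cconj x) z1)) (Cminus 1 (Cmult (Cconj x) z2))))
    by (field; split; auto).
  rewrite Cmod_div by (apply Cmult_neq_0; auto). rewrite !Cmod_mult.
  assert (Hb : Cmod (Cminus 1 (Cmult x (Cconj x))) <= 2).
  { assert (H := Cmod_triangle (RtoC 1) (Copp (Cmult x (Cconj x)))).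
    rewrite Cmod_opp, Cmod_mult, Cmod_conj, Cmod_1 in H.
    assert (0 <= Cmod x) by apply Cmod_ge_0. unfold Cminus. nra. }
  assert (0 <= Cmod x) by apply Cmod_ge_0.
  assert (0 <= Cmod (Cminus z1 z2)) by apply Cmod_ge_0.
  assert (0 <= Cmod (Cminus 1 (Cmult x (Cconj x)))) by apply Cmod_ge_0.
  set (A := Cmod (Cminus 1 (Cmult (Cconj x) z1))) in *.
  set (B := Cmod (Cminus 1 (Cmult (Cconj x) z2))) in *.
  set (d := Cmod (Cminus z1 z2)) in *. set (e := Cmod (Cminus 1 (Cmult x (Cconj x)))) in *.
  set (s := Cmod x) in *. clearbody A B d e s.
  assert (0 < 1 - s) by lra.
  apply Rle_div_l. nra.
  replace (2 / (1 - s) ^ 2 * d * (A * B)) with (2 * d * ((A * B) / (1-s)^2)) by (field; lra).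
  assert (1 <= A * B / (1 - s) ^ 2). { apply Rle_div_r. nra. simpl. nra. }
  nra.
Qed.

Lemma bp_lip a z1 z2 : List.Forall in_disc a -> Cmod z1 <= 1 -> Cmod z2 <= 1 ->
  Cmod (Cminus (blaschke_prod a z1) (blaschke_prod a z2)) <= Ssum a * Cmod (Cminus z1 z2).
Proof.
  intros Ha H1 H2. induction Ha as [|x a Hx Ha IH].
  - unfold Ssum, blaschke_prod; simpl. replace (Cminus (RtoC 1) (RtoC 1)) with (RtoC 0) by ring.
    rewrite Cmod_0. lra.
  - rewrite !bp_cons, Ssum_cons.
    replace (Cminus (Cmult (phi x z1) (blaschke_prod a z1)) (Cmult (phi x z2) (blaschke_prod a z2)))
      with (Cplus (Cmult (Cminus (phi x z1) (phi x z2)) (blaschke_prod a z1)) (Cmult (phi x z2) (Cminus (blaschke_prod a z1) (blaschke_prod a z2)))) by ring.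
    eapply Rle_trans. apply Cmod_triangle. rewrite !Cmod_mult.
    assert (P1 := phi_lip x z1 z2 Hx H1 H2). assert (P2 := phi_le1 x z2 Hx H2).
    assert (P3 := bp_le1 a z1 Ha H1).
    assert (0 <= Cmod (Cminus (phi x z1) (phi x z2))) by apply Cmod_ge_0.
    assert (0 <= Cmod (Cminus (blaschke_prod a z1) (blaschke_prod a z2))) by apply Cmod_ge_0.
    assert (0 <= Cmod (blaschke_prod a z1)) by apply Cmod_ge_0.
    assert (0 <= Cmod (phi x z2)) by apply Cmod_ge_0.
    nra.
Qed.

Lemma bernoulli (rho : R) (m : nat) : 0 <= rho -> 1 - INR m * (1 - rho) <= rho ^ m.
Proof.
  intros H. induction m as [|m IH]. simpl. lra.
  rewrite S_INR. simpl. assert (0 <= INR m) by apply pos_INR.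
  assert (0 <= rho * (rho^m - (1 - INR m*(1-rho)))) by (apply Rmult_le_pos; lra).
  assert (0 <= INR m * ((1-rho)*(1-rho))) by (apply Rmult_le_pos; [lra|apply Rle_0_sqr]). nra.
Qed.

Fixpoint gs (x y : C) (n : nat) : C :=
  match n with O => RtoC 0 | S n => Cplus (Cpow x n) (Cmult y (gs x y n)) end.

Lemma gs_id x y n : Cminus (Cpow x n) (Cpow y n) = Cmult (Cminus x y) (gs x y n).
Proof.
  induction n as [|n IH]; simpl. ring.
  assert (E : Cpow y n = Cminus (Cpow x n) (Cmult (Cminus x y) (gs x y n))).
  { rewrite <- IH. ring. }
  rewrite E. ring.
Qed.


Definition exd (f : C -> C) (z : C) := @ex_derive C_AbsRing C_NormedModule f z.



Lemma Cinv_derive (z0 : C) : z0 <> RtoC 0 ->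
  @is_derive C_AbsRing C_NormedModule Cinv z0 (Copp (Cinv (Cmult z0 z0))).
Proof.
  intros Hz. split.
  - apply is_linear_scal_l.
  - intros x Hx. assert (Ex : z0 = x) by (eapply (@is_filter_lim_locally_unique C_AbsRing (AbsRing_NormedModule C_AbsRing)); exact Hx). subst x.
    intros eps. apply (@locally_le_locally_norm C_AbsRing (AbsRing_NormedModule C_AbsRing) z0).
    assert (Hr : 0 < Cmod z0) by (apply Cmod_gt_0; auto).
    set (r := Cmod z0) in *.
    assert (Hd : 0 < Rmin (r/2) (eps*r^3/2)).
    { apply Rmin_pos. lra. destruct eps as [e He]; simpl. apply Rmult_lt_0_compat; [|lra].
      apply Rmult_lt_0_compat; auto. apply (pow_lt r 3); auto. }
    exists (mkposreal _ Hd). intros y Hy. unfold ball_norm in Hy.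
    change (norm (minus y z0)) with (Cmod (Cminus y z0)) in Hy.
    change (norm (minus (minus (Cinv y) (Cinv z0)) (scal (minus y z0) (Copp (Cinv (Cmult z0 z0))))))
      with (Cmod (Cminus (Cminus (Cinv y) (Cinv z0)) (Cmult (Cminus y z0) (Copp (Cinv (Cmult z0 z0)))))).
    change (norm (minus y z0)) with (Cmod (Cminus y z0)).
    set (d := Cmod (Cminus y z0)) in *. assert (Hy2 : d < Rmin (r/2) (eps*r^3/2)) by exact Hy. clear Hy.
    assert (H1 := Rmin_l (r/2) (eps*r^3/2)). assert (H2 := Rmin_r (r/2) (eps*r^3/2)).
    assert (Hy' : r/2 < Cmod y).
    { assert (H := Cmod_rev z0 y). replace (Cminus z0 y) with (Copp (Cminus y z0)) in H by ring.
      rewrite Cmod_opp in H. change (Cmod z0) with r in H. change (Cmod (Cminus y z0)) with d in H. lra. }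
    assert (Hy0 : y <> RtoC 0). { intro E. rewrite E, Cmod_0 in Hy'. lra. }
    replace (Cminus (Cminus (Cinv y) (Cinv z0)) (Cmult (Cminus y z0) (Copp (Cinv (Cmult z0 z0)))))
      with (Cdiv (Cmult (Cminus y z0) (Cminus y z0)) (Cmult y (Cmult z0 z0))) by (field; auto).
    rewrite Cmod_div. 2:{ repeat apply Cmult_neq_0; auto. }
    rewrite !Cmod_mult. fold r d.
    assert (0 <= d) by apply Cmod_ge_0.
    apply Rle_div_l. apply Rmult_lt_0_compat; [lra| nra].
    destruct eps as [e He]; simpl in *.
    assert (d <= e * r^3/2) by lra.
    assert (e * r ^ 3 / 2 <= e * (Cmod y * (r*r))).
    { simpl. assert (0 < e*r*r) by (apply Rmult_lt_0_compat; nra). nra. }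
    nra.
Qed.

Lemma cv f z l : @is_derive C_AbsRing C_NormedModule f z l -> @is_derive C_AbsRing (AbsRing_NormedModule C_AbsRing) f z l.
Proof. intros [H1 H2]. split.
 - destruct H1 as [a b [M [HM c]]]. constructor; auto. exists M; split; auto.
 - intros x Hx eps. exact (H2 x Hx eps).
Qed.
Lemma cv2 f z l : @is_derive C_AbsRing (AbsRing_NormedModule C_AbsRing) f z l -> @is_derive C_AbsRing C_NormedModule f z l.
Proof. intros [H1 H2]. split.
 - destruct H1 as [a b [M [HM c]]]. constructor; auto. exists M; split; auto.
 - intros x Hx eps. exact (H2 x Hx eps).
Qed.

Lemma exd_const (a z : C) : exd (fun _ => a) z.
Proof. exists zero. apply is_derive_const. Qed.

Lemma exd_id (z : C) : exd (fun x => x) z.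
Proof. exists (RtoC 1). split. apply is_linear_scal_l.
  intros x Hx eps. apply filter_forall. intros y.
  change (Cmod (Cminus (Cminus y x) (Cmult (Cminus y x) (RtoC 1))) <= eps * Cmod (Cminus y x)).
  replace (Cminus (Cminus y x) (Cmult (Cminus y x) (RtoC 1))) with (RtoC 0) by ring.
  rewrite Cmod_0. apply Rmult_le_pos. destruct eps; simpl; lra. apply Cmod_ge_0. Qed.

Lemma exd_plus f g z : exd f z -> exd g z -> exd (fun x => Cplus (f x) (g x)) z.
Proof. intros [l1 H1] [l2 H2]. exists (plus l1 l2). exact (is_derive_plus f g z l1 l2 H1 H2). Qed.

Lemma exd_minus f g z : exd f z -> exd g z -> exd (fun x => Cminus (f x) (g x)) z.
Proof. intros [l1 H1] [l2 H2]. exists (minus l1 l2). exact (is_derive_minus f g z l1 l2 H1 H2). Qed.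

Lemma exd_mult f g z : exd f z -> exd g z -> exd (fun x => Cmult (f x) (g x)) z.
Proof. intros [l1 H1] [l2 H2]. eexists.
  apply cv2. exact (@is_derive_mult C_AbsRing f g z l1 l2 (cv _ _ _ H1) (cv _ _ _ H2) Cmult_comm). Qed.

Lemma exd_comp f g z : exd f (g z) -> exd g z -> exd (fun x => f (g x)) z.
Proof. intros [l1 H1] [l2 H2]. eexists. exact (is_derive_comp f g z l1 l2 H1 (cv _ _ _ H2)). Qed.

Lemma exd_inv f z : f z <> RtoC 0 -> exd f z -> exd (fun x => Cinv (f x)) z.
Proof. intros Hn H. apply (exd_comp Cinv f z); auto. eexists. apply Cinv_derive; auto. Qed.

Lemma exd_pow f z n : exd f z -> exd (fun x => Cpow (f x) n) z.
Proof. intros H. induction n as [|n IH]; simpl. apply exd_const. apply exd_mult; auto. Qed.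

Lemma exd_div f g z : g z <> RtoC 0 -> exd f z -> exd g z -> exd (fun x => Cdiv (f x) (g x)) z.
Proof. intros. apply exd_mult; auto. apply exd_inv; auto. Qed.


Definition Pm (k w0 : C) (m : nat) (w : C) : C := Cmult k (Cpow (Cminus w w0) m).
Definition Qm (w0 : C) (m : nat) (w : C) : C := Cpow (Cminus 1 (Cmult (Cconj w0) w)) m.
Definition Nf k w0 g m w := Cplus (Pm k w0 m w) (Cmult g (Qm w0 m w)).
Definition Df k w0 g m w := Cplus (Qm w0 m w) (Cmult (Cconj g) (Pm k w0 m w)).
Definition Gf k w0 g m w := Cminus (Cmult k (gs (Cminus w w0) (Copp w0) m))
   (Cmult (Cmult g (Cconj w0)) (gs (Cminus 1 (Cmult (Cconj w0) w)) 1 m)).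

Section S.
Variables (k w0 g : C) (m : nat).
Hypothesis Hw0 : Cmod w0 < 1.
Hypothesis Hk : Cmod k < 1.
Hypothesis Hg : Cmod g < 1.

Lemma P_le w : Cmod (Pm k w0 m w) <= Cmod (Cminus w w0) ^ m.
Proof.
  unfold Pm. rewrite Cmod_mult, Cmod_pow. assert (0 <= Cmod k) by apply Cmod_ge_0.
  assert (0 <= Cmod (Cminus w w0) ^ m) by (apply pow_le; apply Cmod_ge_0). nra.
Qed.

Lemma Q_ge w : Cmod w <= 1 -> (1 - Cmod w0) ^ m <= Cmod (Qm w0 m w).
Proof.
  intros Hw. unfold Qm. rewrite Cmod_pow. apply pow_incr. split.
  lra. apply den_ge; auto.
Qed.

Lemma PQ w : Cmod w <= 1 -> Cmod (Pm k w0 m w) <= Cmod k * Cmod (Qm w0 m w).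
Proof.
  intros Hw. unfold Pm, Qm. rewrite Cmod_mult, !Cmod_pow. apply Rmult_le_compat_l. apply Cmod_ge_0.
  apply pow_incr. split. apply Cmod_ge_0. apply num_le; auto.
Qed.

Lemma Qpos w : Cmod w <= 1 -> 0 < Cmod (Qm w0 m w).
Proof.
  intros Hw. eapply Rlt_le_trans; [|apply Q_ge; auto]. apply pow_lt. lra.
Qed.

Lemma D_ge w : Cmod w <= 1 -> Cmod (Qm w0 m w) * (1 - Cmod g) <= Cmod (Df k w0 g m w).
Proof.
  intros Hw. unfold Df.
  assert (H := Cmod_rev (Qm w0 m w) (Copp (Cmult (Cconj g) (Pm k w0 m w)))).
  replace (Cminus (Qm w0 m w) (Copp (Cmult (Cconj g) (Pm k w0 m w)))) with
     (Cplus (Qm w0 m w) (Cmult (Cconj g) (Pm k w0 m w))) in H by ring.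
  rewrite Cmod_opp, Cmod_mult, Cmod_conj in H.
  assert (H2 := PQ w Hw). assert (0 <= Cmod g) by apply Cmod_ge_0.
  assert (0 <= Cmod k) by apply Cmod_ge_0.
  assert (H3 := Qpos w Hw).
  assert (Cmod g * Cmod (Pm k w0 m w) <= Cmod g * Cmod (Qm w0 m w)).
  { apply Rmult_le_compat_l; auto. nra. }
  nra.
Qed.

Lemma D_nz w : Cmod w <= 1 -> Df k w0 g m w <> RtoC 0.
Proof.
  intros Hw E. assert (H := D_ge w Hw). rewrite E, Cmod_0 in H.
  assert (H3 := Qpos w Hw). nra.
Qed.

Lemma N_lt w : Cmod w <= 1 -> Cmod (Nf k w0 g m w) < Cmod (Df k w0 g m w).
Proof.
  intros Hw. apply sq_lt; try apply Cmod_ge_0.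
  unfold Nf, Df. assert (H := id2 (Qm w0 m w) (Pm k w0 m w) g).
  replace (Cplus (Pm k w0 m w) (Cmult g (Qm w0 m w))) with (Cplus (Pm k w0 m w) (Cmult g (Qm w0 m w))) by ring.
  assert (H2 := PQ w Hw). assert (H3 := Qpos w Hw).
  assert (0 <= Cmod k) by apply Cmod_ge_0. assert (0 <= Cmod g) by apply Cmod_ge_0.
  assert (0 <= Cmod (Pm k w0 m w)) by apply Cmod_ge_0.
  assert (Cmod (Pm k w0 m w) < Cmod (Qm w0 m w)) by nra.
  assert (0 < (Cmod (Qm w0 m w) ^ 2 - Cmod (Pm k w0 m w) ^ 2) * (1 - Cmod g ^ 2)).
  { apply Rmult_lt_0_compat; nra. }
  lra.
Qed.

Lemma f_in w : Cmod w <= 1 -> Cmod (Cdiv (Nf k w0 g m w) (Df k w0 g m w)) < 1.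
Proof.
  intros Hw. assert (Hn := D_nz w Hw). rewrite Cmod_div; auto.
  assert (0 < Cmod (Df k w0 g m w)) by (apply Cmod_gt_0; auto).
  apply Rlt_div_l; auto. rewrite Rmult_1_l. apply N_lt; auto.
Qed.

Lemma N_eq (Hkw : Cmult k (Cpow (Copp w0) m) = Copp g) w :
  Nf k w0 g m w = Cmult w (Gf k w0 g m w).
Proof.
  unfold Nf, Gf, Pm, Qm.
  assert (E1 := gs_id (Cminus w w0) (Copp w0) m).
  assert (E2 := gs_id (Cminus 1 (Cmult (Cconj w0) w)) 1 m).
  rewrite Cpow_1_l in E2.
  assert (F1 : Cpow (Cminus w w0) m = Cplus (Cpow (Copp w0) m) (Cmult w (gs (Cminus w w0) (Copp w0) m))).
  { replace (Cmult w (gs (Cminus w w0) (Copp w0) m)) with (Cmult (Cminus (Cminus w w0) (Copp w0)) (gs (Cminus w w0) (Copp w0) m)) by ring.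
    rewrite <- E1. ring. }
  assert (F2 : Cpow (Cminus 1 (Cmult (Cconj w0) w)) m = Cplus 1 (Cmult (Copp (Cmult (Cconj w0) w)) (gs (Cminus 1 (Cmult (Cconj w0) w)) 1 m))).
  { replace (Copp (Cmult (Cconj w0) w)) with (Cminus (Cminus 1 (Cmult (Cconj w0) w)) 1) by ring.
    rewrite <- E2. ring. }
  rewrite F1, F2.
  replace (Cplus (Cmult k (Cplus (Cpow (Copp w0) m) (Cmult w (gs (Cminus w w0) (Copp w0) m))))
     (Cmult g (Cplus 1 (Cmult (Copp (Cmult (Cconj w0) w)) (gs (Cminus 1 (Cmult (Cconj w0) w)) 1 m)))))
   with (Cplus (Cplus (Cmult k (Cpow (Copp w0) m)) g) (Cmult w (Cminus (Cmult k (gs (Cminus w w0) (Copp w0) m))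
   (Cmult (Cmult g (Cconj w0)) (gs (Cminus 1 (Cmult (Cconj w0) w)) 1 m))))) by ring.
  rewrite Hkw. ring.
Qed.

Lemma f_err w : Cmod w <= 1 ->
  Cmod (Cminus (Cdiv (Nf k w0 g m w) (Df k w0 g m w)) g) <=
  2 / (1 - Cmod g) * (Cmod (Cminus w w0) ^ m / (1 - Cmod w0) ^ m).
Proof.
  intros Hw. assert (Hn := D_nz w Hw).
  replace (Cminus (Cdiv (Nf k w0 g m w) (Df k w0 g m w)) g) with
    (Cdiv (Cmult (Pm k w0 m w) (Cminus 1 (Cmult g (Cconj g)))) (Df k w0 g m w))
    by (unfold Nf, Df in *; field; auto).
  rewrite Cmod_div, Cmod_mult; auto.
  assert (Hb : Cmod (Cminus 1 (Cmult g (Cconj g))) <= 2).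
  { assert (H := Cmod_triangle (RtoC 1) (Copp (Cmult g (Cconj g)))).
    rewrite Cmod_opp, Cmod_mult, Cmod_conj, Cmod_1 in H.
    assert (0 <= Cmod g) by apply Cmod_ge_0. unfold Cminus. nra. }
  assert (H1 := P_le w). assert (H2 := Q_ge w Hw). assert (H3 := D_ge w Hw).
  assert (0 <= Cmod g) by apply Cmod_ge_0.
  assert (0 <= Cmod (Pm k w0 m w)) by apply Cmod_ge_0.
  assert (0 <= Cmod (Cminus 1 (Cmult g (Cconj g)))) by apply Cmod_ge_0.
  assert (HE : 0 < (1 - Cmod w0) ^ m) by (apply pow_lt; lra).
  set (E := (1 - Cmod w0) ^ m) in *.
  set (X := Cmod (Cminus w w0) ^ m) in *.
  set (P := Cmod (Pm k w0 m w)) in *. set (Q := Cmod (Qm w0 m w)) in *.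
  set (D := Cmod (Df k w0 g m w)) in *. set (e := Cmod (Cminus 1 (Cmult g (Cconj g)))) in *.
  set (s := Cmod g) in *. clearbody E X P Q D e s.
  assert (0 < 1 - s) by lra.
  assert (HD : E * (1 - s) <= D) by nra.
  assert (0 < E * (1-s)) by nra.
  replace (2 / (1 - s) * (X / E)) with (2 * X / (E * (1 - s))) by (field; lra).
  apply Rle_trans with (P*e/(E*(1-s))).
  - unfold Rdiv. apply Rmult_le_compat_l. nra. apply Rinv_le_contravar; auto.
  - unfold Rdiv. apply Rmult_le_compat_r. left; apply Rinv_0_lt_compat; auto. nra.
Qed.

End S.


Lemma exd_gs u y z n : exd u z -> exd (fun x => gs (u x) y n) z.
Proof.
  intros H. induction n as [|n IH]. change (exd (fun _ => RtoC 0) z). apply exd_const.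
  change (exd (fun x => Cplus (Cpow (u x) n) (Cmult y (gs (u x) y n))) z).
  apply exd_plus. apply exd_pow; auto. apply exd_mult. apply exd_const. auto.
Qed.

Lemma exd_bp a z : List.Forall in_disc a -> Cmod z <= 1 -> exd (blaschke_prod a) z.
Proof.
  intros Ha Hz. induction Ha as [|x a Hx Ha IH].
  - change (exd (fun _ => RtoC 1) z). apply exd_const.
  - change (exd (fun z => Cmult (phi x z) (blaschke_prod a z)) z).
    apply exd_mult; auto. unfold phi. apply exd_div.
    apply den_nz; auto. apply exd_minus. apply exd_id. apply exd_const.
    apply exd_minus. apply exd_const. apply exd_mult. apply exd_const. apply exd_id.
Qed.

Lemma exd_Nf k w0 g m w : exd (Nf k w0 g m) w.
Proof.
  unfold Nf, Pm, Qm. apply exd_plus.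
  - apply exd_mult. apply exd_const. apply exd_pow. apply exd_minus. apply exd_id. apply exd_const.
  - apply exd_mult. apply exd_const. apply exd_pow. apply exd_minus. apply exd_const.
    apply exd_mult. apply exd_const. apply exd_id.
Qed.

Lemma exd_Df k w0 g m w : exd (Df k w0 g m) w.
Proof.
  unfold Df, Pm, Qm. apply exd_plus.
  - apply exd_pow. apply exd_minus. apply exd_const.
    apply exd_mult. apply exd_const. apply exd_id.
  - apply exd_mult. apply exd_const. apply exd_mult. apply exd_const. apply exd_pow. apply exd_minus. apply exd_id. apply exd_const.
Qed.

Lemma exd_Gf k w0 g m w : exd (Gf k w0 g m) w.
Proof.
  unfold Gf. apply exd_minus.
  - apply exd_mult. apply exd_const. apply exd_gs. apply exd_minus. apply exd_id. apply exd_const.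
  - apply exd_mult. apply exd_const. apply exd_gs. apply exd_minus. apply exd_const.
    apply exd_mult. apply exd_const. apply exd_id.
Qed.

Theorem mainTheorem9 (B0 : C -> C) (gamma : C) (m : nat) :
  finite_blaschke B0 -> in_disc gamma -> (0 < m)%nat ->
  exists (zeta : C) (f g : C -> C),
    in_disc zeta /\
    holomorphic_on_disc f /\
    (forall z : C, in_disc z -> in_disc (f z)) /\
    holomorphic_on_disc g /\
    (forall z : C, in_disc z -> f z = Cmult (B0 z) (g z)) /\
    (exists (K delta : R), 0 < delta /\
       forall h : C, Cmod h < delta -> in_disc (Cplus zeta h) ->
         Cmod (Cminus (f (Cplus zeta h)) gamma) <= K * (Cmod h) ^ m).
Proof.
  intros HB Hg Hm. destruct HB as (c & a & Hc & Ha & HBeq).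
  assert (Hc0 : c <> RtoC 0) by (intro E; rewrite E, Cmod_0 in Hc; lra).
  destruct a as [|x0 a'].
  { exists (RtoC 0), (fun _ => gamma), (fun _ => Cdiv gamma c). repeat split.
    - unfold in_disc; rewrite Cmod_0; lra.
    - intros z _; apply exd_const.
    - intros; auto.
    - intros z _; apply exd_const.
    - intros z Hz. rewrite HBeq by auto. unfold blaschke_prod; simpl. field; auto.
    - exists 0, 1. split; [lra|]. intros h _ _.
      replace (Cminus gamma gamma) with (RtoC 0) by ring. rewrite Cmod_0. lra. }
  remember (x0 :: a') as a eqn:Ea.
  assert (HS : 0 <= Ssum a) by (apply Ssum_ge0; auto).
  set (S := Ssum a) in *.
  unfold in_disc in Hg.
  assert (Hg0 : 0 <= Cmod gamma) by apply Cmod_ge_0.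
  set (g2 := Cmod gamma ^ 2).
  assert (Hg2 : 0 <= g2 < 1) by (unfold g2; split; nra).
  assert (HmR : 0 <= INR m) by apply pos_INR.
  assert (Hden : 2 <= 2 * (INR m * S + 1)) by nra.
  set (t := (1 - g2) / (2 * (INR m * S + 1))).
  assert (Ht : t * (2 * (INR m * S + 1)) = 1 - g2) by (unfold t; field; lra).
  assert (Ht0 : 0 < t) by (unfold t; apply Rdiv_lt_0_compat; lra).
  assert (Ht1 : t <= 1/2) by nra.
  clearbody t.
  set (r := sqrt (1 - t)).
  assert (Hr2 : r ^ 2 = 1 - t) by (unfold r; simpl; rewrite Rmult_1_r; apply sqrt_sqrt; lra).
  assert (Hr0 : 0 <= r) by apply sqrt_pos.
  assert (Hr1 : r < 1) by nra.
  clearbody r.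
  assert (HrC : Cmod (RtoC r) = r) by (rewrite Cmod_R, Rabs_pos_eq; lra).
  set (w0 := Cmult c (blaschke_prod a (RtoC r))).
  assert (Hw0m : Cmod w0 = Cmod (blaschke_prod a (RtoC r))) by (unfold w0; rewrite Cmod_mult, Hc; ring).
  assert (Hlow := bp_lower a r Ha (conj Hr0 Hr1)). fold S in Hlow.
  rewrite <- Hw0m, Hr2 in Hlow.
  assert (Hw0lt : Cmod w0 < 1).
  { rewrite Hw0m, Ea. apply bp_lt1. rewrite <- Ea; auto. lra. }
  assert (Hw00 : 0 <= Cmod w0) by apply Cmod_ge_0.
  set (rho := Cmod w0 ^ 2) in *.
  assert (Hrho0 : 0 <= rho) by (unfold rho; nra).
  assert (HB1 := bernoulli rho m Hrho0).
  assert (HtS : INR m * t * S * 2 <= 1 - g2).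
  { rewrite <- Ht. assert (0 <= t * 2) by lra. nra. }
  assert (Hrhom : g2 < rho ^ m).
  { assert (INR m * (1 - rho) <= INR m * (t * S)) by (apply Rmult_le_compat_l; lra). nra. }
  assert (Hpm : (Cmod w0 ^ m) ^ 2 = rho ^ m).
  { unfold rho. rewrite <- !pow_mult. f_equal. apply Nat.mul_comm. }
  assert (HwM : Cmod gamma < Cmod w0 ^ m).
  { apply sq_lt; auto. apply pow_le; auto. rewrite Hpm. exact Hrhom. }
  assert (Hw0nz : w0 <> RtoC 0).
  { intro E. rewrite E, Cmod_0, pow_i in HwM by lia. lra. }
  assert (Hpw : Cpow (Copp w0) m <> RtoC 0).
  { apply Cpow_nz. intro E. apply Hw0nz. replace w0 with (Copp (Copp w0)) by ring. rewrite E. ring. }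
  set (k := Cdiv (Copp gamma) (Cpow (Copp w0) m)).
  assert (Hkw : Cmult k (Cpow (Copp w0) m) = Copp gamma) by (unfold k; field; auto).
  assert (Hk : Cmod k < 1).
  { unfold k. rewrite Cmod_div by auto. rewrite Cmod_opp, Cmod_pow, Cmod_opp.
    apply Rlt_div_l. lra. lra. }
  clearbody k.
  assert (HW1 : forall z, in_disc z -> Cmod (Cmult c (blaschke_prod a z)) <= 1).
  { intros z Hz. rewrite Cmod_mult, Hc, Rmult_1_l. apply bp_le1; auto. unfold in_disc in Hz; lra. }
  assert (HWd : forall z, in_disc z -> exd (fun z => Cmult c (blaschke_prod a z)) z).
  { intros z Hz. apply exd_mult. apply exd_const. apply exd_bp; auto. unfold in_disc in Hz; lra. }
  exists (RtoC r),
    (fun z => Cdiv (Nf k w0 gamma m (Cmult c (blaschke_prod a z))) (Df k w0 gamma m (Cmult c (blaschke_prod a z)))),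
    (fun z => Cdiv (Gf k w0 gamma m (Cmult c (blaschke_prod a z))) (Df k w0 gamma m (Cmult c (blaschke_prod a z)))).
  repeat split.
  - unfold in_disc. lra.
  - intros z Hz. apply exd_div.
    + eapply D_nz; eauto.
    + apply (exd_comp (Nf k w0 gamma m) (fun z => Cmult c (blaschke_prod a z))); auto. apply exd_Nf.
    + apply (exd_comp (Df k w0 gamma m) (fun z => Cmult c (blaschke_prod a z))); auto. apply exd_Df.
  - intros z Hz. unfold in_disc. eapply f_in; eauto.
  - intros z Hz. apply exd_div.
    + eapply D_nz; eauto.
    + apply (exd_comp (Gf k w0 gamma m) (fun z => Cmult c (blaschke_prod a z))); auto. apply exd_Gf.
    + apply (exd_comp (Df k w0 gamma m) (fun z => Cmult c (blaschke_prod a z))); auto. apply exd_Df.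
  - intros z Hz. rewrite HBeq by auto. rewrite (N_eq k w0 gamma m Hkw). unfold Cdiv. ring.
  - exists (2 / (1 - Cmod gamma) * (S ^ m / (1 - Cmod w0) ^ m)), 1. split; [lra|].
    intros h _ Hh.
    assert (Hw := HW1 _ Hh).
    assert (E := f_err k w0 gamma m Hw0lt Hk Hg _ Hw).
    eapply Rle_trans; [exact E|].
    assert (Hl : Cmod (Cminus (Cmult c (blaschke_prod a (Cplus (RtoC r) h))) w0) <= S * Cmod h).
    { unfold w0. replace (Cminus (Cmult c (blaschke_prod a (Cplus (RtoC r) h))) (Cmult c (blaschke_prod a (RtoC r))))
        with (Cmult c (Cminus (blaschke_prod a (Cplus (RtoC r) h)) (blaschke_prod a (RtoC r)))) by ring.
      rewrite Cmod_mult, Hc, Rmult_1_l.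
      replace h with (Cminus (Cplus (RtoC r) h) (RtoC r)) at 2 by ring.
      apply bp_lip; auto. unfold in_disc in Hh; lra. lra. }
    assert (Hl2 : Cmod (Cminus (Cmult c (blaschke_prod a (Cplus (RtoC r) h))) w0) ^ m <= S ^ m * Cmod h ^ m).
    { rewrite <- Rpow_mult_distr. apply pow_incr. split. apply Cmod_ge_0. auto. }
    assert (HE : 0 < (1 - Cmod w0) ^ m) by (apply pow_lt; lra).
    assert (0 < 2 / (1 - Cmod gamma)) by (apply Rdiv_lt_0_compat; lra).
    replace (2 / (1 - Cmod gamma) * (S ^ m / (1 - Cmod w0) ^ m) * Cmod h ^ m)
      with (2 / (1 - Cmod gamma) * (S ^ m * Cmod h ^ m / (1 - Cmod w0) ^ m)) by (field; lra).
    apply Rmult_le_compat_l. lra.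
    unfold Rdiv. apply Rmult_le_compat_r. left; apply Rinv_0_lt_compat; auto. auto.
Qed.
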